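(* For every $M\in\mathbb{R}^{n\times n}$ with block structure $0=n_0<n_1<\dots<n_m=n$, $$\|\mathcal{U}_b(M)\|_{S_\infty}\le(\lceil\log_2(m)\rceil+1)\|M\|_{S_\infty}.$$
   Context: Block $(i,j)$, $0\le i,j\le m-1$, consists of rows $n_i+1..n_{i+1}$ and columns $n_j+1..n_{j+1}$. $\mathcal{U}_b(M)$ has blocks $\mathcal{U}_b(M)(i,j)=M(i,j)$ for $i\le j$ and $0$ for $i>j$. $\|\cdot\|_{S_\infty}$ is the spectral norm. *)

(* Defs.v *)
From HB Require Import structures.
From mathcomp Require Import all_boot all_order all_algebra.
From mathcomp Require Import boolp classical_sets reals.
Set Implicit Arguments. Unset Strict Implicit. Unset Printing Implicit Defensive.
Import Order.TTheory GRing.Theory Num.Theory.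
Local Open Scope ring_scope.

Definition l2norm (R : realType) (q : nat) (x : 'cV[R]_q) : R :=
  Num.sqrt (\sum_(i < q) x i 0 ^+ 2).

(* Spectral norm (operator norm l2 -> l2 = largest singular value). *)
Definition specnorm (R : realType) (p q : nat) (M : 'M[R]_(p, q)) : R :=
  sup [set l2norm (M *m x) | x in [set x : 'cV[R]_q | l2norm x <= 1]]%classic.

(* 0-indexed row/column index i lies in block k, i.e. in rows n_k+1..n_{k+1}
   (1-indexed), given the block boundaries nb : nat -> nat. *)
Definition inblock (nb : nat -> nat) (k i : nat) : bool :=
  (nb k <= i < nb k.+1)%N.

Definition ublock (R : realType) (n m : nat) (nb : nat -> nat)
    (M : 'M[R]_n) : 'M[R]_n :=
  \matrix_(i < n, j < n)
    if [exists k : 'I_m, exists l : 'I_m,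
          [&& (k <= l)%N, inblock nb k i & inblock nb l j]]
    then M i j else 0.

(* Main.v *)
Require Import Defs.
From HB Require Import structures.
From mathcomp Require Import all_boot all_order all_algebra.
From mathcomp Require Import boolp classical_sets reals.
From mathcomp Require Import ring lra zify.
Import Order.TTheory GRing.Theory Num.Theory.
Local Open Scope ring_scope.

Section Main.
Variable R : realType.
Variable n : nat.

Lemma cs (f g : 'I_n -> R) :
  (\sum_i f i * g i) ^+ 2 <= (\sum_i f i ^+ 2) * (\sum_i g i ^+ 2).
Proof.
have H : 0 <= \sum_i \sum_j (f i * g j - f j * g i) ^+ 2.
  by apply: sumr_ge0 => i _; apply: sumr_ge0 => j _; apply: sqr_ge0.
have E : \sum_i \sum_j (f i * g j - f j * g i) ^+ 2 =
   2 * ((\sum_i f i ^+ 2) * (\sum_i g i ^+ 2) - (\sum_i f i * g i) ^+ 2).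
  have E1 : forall i j, (f i * g j - f j * g i) ^+ 2 =
     f i ^+ 2 * g j ^+ 2 + g i ^+ 2 * f j ^+ 2 - 2 * (f i * g i) * (f j * g j).
    by move=> i j; ring.
  under eq_bigr => i _ do under eq_bigr => j _ do rewrite E1.
  under eq_bigr => i _ do rewrite sumrB big_split /= -!mulr_sumr.
  rewrite sumrB big_split /= -!mulr_suml.
  rewrite -mulr_sumr; ring.
lra.
Qed.

Definition sn (x : 'cV[R]_n) := \sum_i x i 0 ^+ 2.

Lemma sn_ge0 x : 0 <= sn x.
Proof. by apply: sumr_ge0 => i _; apply: sqr_ge0. Qed.

Lemma l2normE (x : 'cV[R]_n) : l2norm x = Num.sqrt (sn x). Proof. by []. Qed.

Lemma l2norm_ge0 (x : 'cV[R]_n) : 0 <= l2norm x.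
Proof. exact: sqrtr_ge0. Qed.

Lemma sn_eq0 x : sn x = 0 -> x = 0.
Proof.
move=> h; apply/matrixP => i j; rewrite (ord1 j) mxE.
have := @psumr_eq0P _ _ predT (fun i => x i 0 ^+ 2) (fun i _ => sqr_ge0 (x i 0)) h i isT.
by move/eqP; rewrite sqrf_eq0 => /eqP.
Qed.

Lemma l2normD (x y : 'cV[R]_n) : l2norm (x + y) <= l2norm x + l2norm y.
Proof.
rewrite /l2norm.
set a := \sum_i x i 0 ^+ 2; set b := \sum_i y i 0 ^+ 2.
have a0 : 0 <= a by apply: sn_ge0.
have b0 : 0 <= b by apply: sn_ge0.
have c0 : 0 <= Num.sqrt a + Num.sqrt b by apply: addr_ge0; apply: sqrtr_ge0.
rewrite -(ger0_norm c0) -sqrtr_sqr ler_sqrt; last by apply: sqr_ge0.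
have -> : \sum_i (x + y) i 0 ^+ 2 = a + b + 2 * \sum_i x i 0 * y i 0.
  rewrite /a /b -big_split mulr_sumr -big_split /=; apply: eq_bigr => i _.
  rewrite mxE; ring.
have hd : \sum_i x i 0 * y i 0 <= Num.sqrt a * Num.sqrt b.
  rewrite -sqrtrM // (le_trans (ler_norm _)) // -sqrtr_sqr ler_sqrt.
    exact: (cs (fun i => x i 0) (fun i => y i 0)).
  by apply: mulr_ge0.
rewrite sqrrD !sqr_sqrtr //; lra.
Qed.

Lemma l2normZ (c : R) (x : 'cV[R]_n) : l2norm (c *: x) = `|c| * l2norm x.
Proof.
rewrite /l2norm -sqrtr_sqr -sqrtrM ?sqr_ge0 // mulr_sumr; congr Num.sqrt.
by apply: eq_bigr => i _; rewrite mxE; ring.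
Qed.

Lemma l2norm0 : l2norm (0 : 'cV[R]_n) = 0.
Proof.
rewrite /l2norm big1 ?sqrtr0 // => i _; by rewrite mxE expr0n.
Qed.

Definition opb (A : 'M[R]_n) c := forall x, l2norm (A *m x) <= c * l2norm x.

Lemma opb_sn A c : 0 <= c -> (forall x, sn (A *m x) <= c ^+ 2 * sn x) -> opb A c.
Proof.
move=> c0 h x; rewrite !l2normE -(ger0_norm c0) -sqrtr_sqr -sqrtrM ?sqr_ge0 //.
rewrite ler_sqrt ?h //; apply: mulr_ge0; [apply: sqr_ge0 | apply: sn_ge0].
Qed.

Lemma sn_opb A c : 0 <= c -> opb A c -> forall x, sn (A *m x) <= c ^+ 2 * sn x.
Proof.
move=> c0 h x; have hx := h x.
rewrite !l2normE -(ger0_norm c0) -sqrtr_sqr -sqrtrM ?sqr_ge0 // in hx.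
move: hx; rewrite ler_sqrt //; apply: mulr_ge0; [apply: sqr_ge0 | apply: sn_ge0].
Qed.

Lemma opb_mono A c c' : c <= c' -> opb A c -> opb A c'.
Proof.
move=> le h x; apply: (le_trans (h x)); apply: ler_wpM2r => //; exact: l2norm_ge0.
Qed.

Lemma opbD A B c c' : opb A c -> opb B c' -> opb (A + B) (c + c').
Proof.
move=> hA hB x; rewrite mulmxDl mulrDl.
by apply: (le_trans (l2normD _ _)); apply: lerD.
Qed.

Lemma sn_crude (A : 'M[R]_n) x : sn (A *m x) <= (\sum_i \sum_j A i j ^+ 2) * sn x.
Proof.
rewrite /sn mulr_suml; apply: ler_sum => i _; rewrite mxE.
exact: (cs (fun j => A i j) (fun j => x j 0)).
Qed.

Lemma opb_crude A : exists c, 0 <= c /\ opb A c.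
Proof.
exists (Num.sqrt (\sum_i \sum_j A i j ^+ 2)); split; first exact: sqrtr_ge0.
apply: opb_sn; first exact: sqrtr_ge0.
move=> x; rewrite sqr_sqrtr; first exact: sn_crude.
by apply: sumr_ge0 => i _; apply: sumr_ge0 => j _; apply: sqr_ge0.
Qed.

Definition Sset (A : 'M[R]_n) :=
  [set l2norm (A *m x) | x in [set x : 'cV[R]_n | l2norm x <= 1]]%classic.

Lemma Sset_has_sup A : has_sup (Sset A).
Proof.
split; first by exists 0; exists 0; rewrite /= ?mulmx0 l2norm0 //.
have [c [c0 hc]] := opb_crude A.
exists c => y [x /= hx <-]; apply: (le_trans (hc x)).
by rewrite -[leRHS]mulr1; apply: ler_wpM2l.
Qed.

Lemma specnorm_ge0 (A : 'M[R]_n) : 0 <= specnorm A.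
Proof.
apply: (sup_upper_bound (Sset_has_sup A)); exists 0; rewrite /= ?l2norm0 //.
by rewrite mulmx0 l2norm0.
Qed.

Lemma specnorm_opb (A : 'M[R]_n) : opb A (specnorm A).
Proof.
move=> x.
have [hx|hx] := eqVneq (sn x) 0.
  by rewrite (sn_eq0 x hx) mulmx0 l2norm0 mulr0.
have t0 : 0 < l2norm x.
  by rewrite l2normE sqrtr_gt0 lt_def hx sn_ge0.
set t := l2norm x in t0 *.
have hy : l2norm (t^-1 *: x) = 1 by rewrite l2normZ ger0_norm ?invr_ge0 ?(ltW t0) // mulVf // gt_eqF.
have hS : Sset A (l2norm (A *m (t^-1 *: x))).
  by exists (t^-1 *: x) => //=; rewrite hy.
have h1 : l2norm (A *m (t^-1 *: x)) <= specnorm A := sup_upper_bound (Sset_has_sup A) hS.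
rewrite -scalemxAr l2normZ ger0_norm ?invr_ge0 ?(ltW t0) // in h1.
by rewrite ler_pdivrMl // mulrC in h1.
Qed.

Lemma specnorm_le (A : 'M[R]_n) c : 0 <= c -> opb A c -> specnorm A <= c.
Proof.
move=> c0 h; apply: ge_sup; first by case: (Sset_has_sup A).
move=> y [x /= hx <-]; apply: (le_trans (h x)).
by rewrite -[leRHS]mulr1; apply: ler_wpM2l.
Qed.


Definition mask (P : 'I_n -> 'I_n -> bool) (A : 'M[R]_n) : 'M[R]_n :=
  \matrix_(i, j) if P i j then A i j else 0.

Definition proj (S : pred 'I_n) (x : 'cV[R]_n) : 'cV[R]_n :=
  \col_i (if S i then x i 0 else 0).

Lemma mask_col (P : 'I_n -> 'I_n -> bool) (T : pred 'I_n) A x : (forall i j, P i j -> T j) ->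
  mask P A *m x = mask P A *m proj T x.
Proof.
move=> H; apply/matrixP => i k; rewrite (ord1 k) !mxE; apply: eq_bigr => j _.
rewrite !mxE; case: (boolP (P i j)) => h; last by rewrite !mul0r.
by rewrite (H _ _ h).
Qed.

Lemma mask_rect (S T : pred 'I_n) A x :
  mask (fun i j => S i && T j) A *m x = proj S (A *m proj T x).
Proof.
apply/matrixP => i k; rewrite (ord1 k) !mxE.
case: (boolP (S i)) => hS /=.
  apply: eq_bigr => j _; rewrite !mxE hS /=; case: (T j); by rewrite ?mulr0 ?mul0r.
rewrite big1 // => j _; by rewrite !mxE (negbTE hS) mul0r.
Qed.

Lemma sn_proj (S : pred 'I_n) x : sn (proj S x) + sn (proj (predC S) x) = sn x.
Proof.
rewrite /sn -big_split; apply: eq_bigr => i _; rewrite !mxE /=.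
by case: (S i); rewrite /= ?expr0n ?addr0 ?add0r.
Qed.

Lemma l2norm_proj S x : l2norm (proj S x) <= l2norm x.
Proof.
rewrite !l2normE ler_sqrt ?sn_ge0 // -(sn_proj S x) lerDl; exact: sn_ge0.
Qed.

Lemma opb_rect (S T : pred 'I_n) A :
  opb (mask (fun i j => S i && T j) A) (specnorm A).
Proof.
move=> x; rewrite mask_rect; apply: (le_trans (l2norm_proj _ _)).
apply: (le_trans (specnorm_opb _ _)); apply: ler_wpM2l; first exact: specnorm_ge0.
exact: l2norm_proj.
Qed.

Variable f : 'I_n -> nat.

Definition Vb a b A := mask (fun i j => [&& (a <= f i)%N, (f i <= f j)%N & (f j < b)%N]) A.

Lemma Vb_split a c b A : (a <= c <= b)%N ->
  Vb a b A = (Vb a c A + Vb c b A) +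
     mask (fun i j => ((a <= f i)%N && (f i < c)%N) && ((c <= f j)%N && (f j < b)%N)) A.
Proof.
move=> /andP[ac cb]; apply/matrixP => i j; rewrite !mxE.
case: (leqP a (f i)) => h1; case: (leqP (f i) (f j)) => h2;
case: (ltnP (f j) b) => h3; case: (ltnP (f i) c) => h4; case: (ltnP (f j) c) => h5;
rewrite /= ?addr0 ?add0r //; exfalso; lia.
Qed.

Lemma disj_sum a c b A x : (a <= c <= b)%N ->
  sn ((Vb a c A + Vb c b A) *m x) = sn (Vb a c A *m proj (fun j => (f j < c)%N) x)
     + sn (Vb c b A *m proj (predC (fun j => (f j < c)%N)) x).
Proof.
move=> _.
rewrite -(mask_col _ (fun j => (f j < c)%N)); last first.
  by move=> i j /and3P[_ h1 h2].
rewrite -(mask_col _ (predC (fun j => (f j < c)%N))); last first.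
  by move=> i j /and3P[h0 h1 _] /=; rewrite -leqNgt (leq_trans h0 h1).
rewrite /sn -big_split; apply: eq_bigr => i _; rewrite mulmxDl mxE.
have [hi|hi] := ltnP (f i) c.
  have -> : (Vb c b A *m x) i 0 = 0.
    by rewrite mxE; apply: big1 => j _; rewrite mxE leqNgt hi /= mul0r.
  by rewrite /= /Vb addr0 expr0n addr0.
have -> : (Vb a c A *m x) i 0 = 0.
  rewrite mxE; apply: big1 => j _; rewrite mxE.
  case: (boolP [&& _, _ & _]) => [/and3P[_ h1 h2]|]; last by rewrite mul0r.
  by have := leq_ltn_trans (leq_trans hi h1) h2; rewrite ltnn.
by rewrite /= /Vb add0r expr0n add0r.
Qed.

Lemma opb_diag a c b A k : 0 <= k -> (a <= c <= b)%N ->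
  opb (Vb a c A) k -> opb (Vb c b A) k -> opb (Vb a c A + Vb c b A) k.
Proof.
move=> k0 hab h1 h2; apply: opb_sn => // x.
rewrite (disj_sum _ _ _ _ _ hab) -(sn_proj (fun j => (f j < c)%N) x) mulrDr.
by apply: lerD; apply: sn_opb.
Qed.

Lemma Vb_main (A : 'M[R]_n) : forall d, (0 < d)%N -> forall a,
  opb (Vb a (a + d) A) ((up_log 2 d).+1%:R * specnorm A).
Proof.
have s0 := specnorm_ge0 A.
elim/ltn_ind => d IH d0 a.
case: d d0 IH => [//|[|d]] _ IH.
  have -> : Vb a (a + 1) A = mask (fun i j => ((f i == a)) && (f j == a)) A.
    apply/matrixP => i j; rewrite !mxE.
    case: (leqP a (f i)) => h1; case: (leqP (f i) (f j)) => h2;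
    case: (ltnP (f j) (a + 1)) => h3; case: (eqVneq (f i) a) => h4;
    case: (eqVneq (f j) a) => h5; rewrite //=; exfalso; lia.
  rewrite up_log1 mul1r; exact: opb_rect.
set h := (d.+1./2.+1)%N.
have hd : (0 < d.+2 - h)%N by rewrite /h; lia.
have hh : (h < d.+2)%N by rewrite /h; lia.
have hle : (d.+2 - h <= h)%N by rewrite /h; lia.
rewrite (Vb_split a (a + h) (a + d.+2) A); last by lia.
have -> : (a + d.+2 = (a + h) + (d.+2 - h))%N by lia.
rewrite up_log2S // -/h.
have -> : (up_log 2 h).+2%:R * specnorm A = (up_log 2 h).+1%:R * specnorm A + specnorm A.
  by rewrite -[(up_log 2 h).+2]addn1 natrD mulrDl mul1r.
apply: opbD; last exact: opb_rect.
apply: opb_diag; first by apply: mulr_ge0.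
- by lia.
- by apply: IH.
apply: opb_mono (IH _ _ hd _) => //.
apply: ler_wpM2r => //; rewrite ler_nat ltnS; exact: leq_up_log.
rewrite /h; lia.
Qed.

End Main.




Theorem mainTheorem11 (R : realType) (n m : nat) (nb : nat -> nat)
    (hm : (0 < m)%N) (h0 : nb 0%N = 0%N) (hn : nb m = n)
    (hinc : forall k, (k < m)%N -> (nb k < nb k.+1)%N)
    (M : 'M[R]_n) :
  specnorm (ublock m nb M) <= ((up_log 2 m).+1)%:R * specnorm M.
Proof.
pose blk (i : 'I_n) : nat :=
  if [pick k : 'I_m | inblock nb k i] is Some k then val k else 0%N.
have mono : forall k l, (k <= l)%N -> (l <= m)%N -> (nb k <= nb l)%N.
  move=> k l; elim: l => [|l IHl] kl lm; first by rewrite leqn0 in kl; rewrite (eqP kl).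
  case: (eqVneq k l.+1) => [->//|ne]; have kl' : (k <= l)%N by lia.
  exact: leq_trans (IHl kl' (ltnW lm)) (ltnW (hinc l lm)).
have ex : forall b, (b <= m)%N -> forall j, (j < nb b)%N ->
    exists k : 'I_m, inblock nb k j.
  elim=> [|b IHb] bm j hj; first by rewrite h0 in hj.
  case: (ltnP j (nb b)) => hjb; first exact: IHb (ltnW bm) j hjb.
  by exists (Ordinal bm); rewrite /inblock /= hjb hj.
have uq : forall (k l : 'I_m) j, inblock nb k j -> inblock nb l j -> k = l.
  have one : forall (k l : 'I_m) j, inblock nb k j -> inblock nb l j -> (k <= l)%N.
    move=> k l j /andP[a1 a2] /andP[b1 b2]; rewrite leqNgt; apply/negP => lt.
    have := mono l.+1 k lt (ltnW (ltn_ord k)); lia.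
  move=> k l j hk hl; apply/val_inj/eqP; rewrite eqn_leq.
  by rewrite (one _ _ _ hk hl) (one _ _ _ hl hk).
have blkE : forall (k : 'I_m) (i : 'I_n), inblock nb k i -> blk i = k.
  move=> k i hk; rewrite /blk; case: pickP => [k' hk'|/(_ k)].
    by rewrite (uq _ _ _ hk' hk).
  by rewrite hk.
have exi : forall i : 'I_n, exists k : 'I_m, inblock nb k i.
  by move=> i; apply: (ex m (leqnn m)); rewrite hn ltn_ord.
have -> : ublock m nb M = Vb R n blk 0 m M.
  apply/matrixP => i j; rewrite !mxE; congr (if _ then _ else _).
  apply/idP/idP.
    move=> /existsP[k /existsP[l /and3P[kl hk hl]]].
    by rewrite (blkE _ _ hk) (blkE _ _ hl) kl /= ltn_ord.
  move=> /and3P[_ hij _]; have [k hk] := exi i; have [l hl] := exi j.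
  apply/existsP; exists k; apply/existsP; exists l.
  by rewrite hk hl andbT -(blkE _ _ hk) -(blkE _ _ hl) hij.
apply: specnorm_le; first by apply: mulr_ge0; [exact: ler0n | exact: specnorm_ge0].
by have := Vb_main R n blk M m hm 0; rewrite add0n.
Qed.
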